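(* Let $(G,P,\Delta)$ be a Garside structure of finite type on a group $G$, and let $S$ be its set of simple elements. Then $$\langle S\setminus\{e\}\mid s\cdot t=st \text{ for all } s,t\in S\setminus\{e\} \text{ such that } st\in S\rangle$$ is a restricted triangular presentation of $G$.
   Context: A Garside structure $(G,P,\Delta)$ on a group $G$ consists of a submonoid $P$ with $P\cap P^{-1}=\{e\}$ and an element $\Delta\in P$ such that: (i) the partial order $a\le_L b\iff a^{-1}b\in P$ is a lattice order on $G$; (ii) the set of simple elements $[e,\Delta]=\{a\in G\mid e\le_L a\le_L\Delta\}$ generates $P$; (iii) $\Delta^{-1}P\Delta=P$; (iv) for every $x\in P\setminus\{e\}$, $\sup\{k\mid x=a_1\cdots a_k,\ a_i\in P\setminus\{e\}\}<\infty$. It is of finite type if $[e,\Delta]$ is finite. A presentation $\langle T\mid R\rangle$ of $G$ ($T\subset G$ a finite generating set) is a restricted triangular presentation if: $T\cap T^{-1}=\emptyset$; $R=\{a\cdot b\cdot c^{-1}\mid a,b,c\in T,\ abc^{-1}=e\text{ in }G\}$ and $\langle T\mid R\rangle$ presents $G$; there are no $a,b,c\in T$ with $abc=e$ in $G$; and for $a,b,c\in T$, $abc\in T$ implies $ab\in T$ and $bc\in T$. *)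

(* Defs.v *)
From Stdlib Require Import List.
Import ListNotations.
Set Implicit Arguments.

Record group := Group {
  gcar :> Type;
  gmul : gcar -> gcar -> gcar;
  gone : gcar;
  ginv : gcar -> gcar;
  gmulA : forall x y z, gmul x (gmul y z) = gmul (gmul x y) z;
  gmul1l : forall x, gmul gone x = x;
  gmulVl : forall x, gmul (ginv x) x = gone
}.

Section Defs.
Context {G : group}.
Local Notation "x * y" := (gmul G x y).
Local Notation e := (gone G).

Definition gprod (l : list G) : G := fold_right (gmul G) e l.

Definition finite_set (A : G -> Prop) : Prop :=
  exists l : list G, forall x, A x <-> In x l.

Definition leL (P : G -> Prop) (a b : G) : Prop := P (ginv G a * b).

Definition is_lub (le : G -> G -> Prop) (a b c : G) : Prop :=
  le a c /\ le b c /\ forall d, le a d -> le b d -> le c d.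
Definition is_glb (le : G -> G -> Prop) (a b c : G) : Prop :=
  le c a /\ le c b /\ forall d, le d a -> le d b -> le d c.

Definition lattice_order (le : G -> G -> Prop) : Prop :=
  (forall a, le a a) /\
  (forall a b c, le a b -> le b c -> le a c) /\
  (forall a b, le a b -> le b a -> a = b) /\
  (forall a b, exists c, is_lub le a b c) /\
  (forall a b, exists c, is_glb le a b c).

Definition simples (P : G -> Prop) (Delta : G) (a : G) : Prop :=
  leL P e a /\ leL P a Delta.

Definition gen_submonoid (A : G -> Prop) (x : G) : Prop :=
  exists l : list G, Forall A l /\ x = gprod l.

Definition garside (P : G -> Prop) (Delta : G) : Prop :=
  P e /\ (forall a b, P a -> P b -> P (a * b)) /\
  (forall a, P a -> P (ginv G a) -> a = e) /\
  P Delta /\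
  lattice_order (leL P) /\
  (forall x, P x <-> gen_submonoid (simples P Delta) x) /\
  (forall x, P x <-> (exists y, P y /\ x = ginv G Delta * y * Delta)) /\
  (forall x, P x -> x <> e ->
     exists N : nat, forall l : list G,
       Forall (fun a => P a /\ a <> e) l -> gprod l = x -> length l <= N).

Definition garside_finite_type (P : G -> Prop) (Delta : G) : Prop :=
  garside P Delta /\ finite_set (simples P Delta).

(** words: letters (true, a) = a, (false, a) = a^{-1} *)
Definition word := list (bool * gcar G).

Definition eval_letter (x : bool * G) : G :=
  if fst x then snd x else ginv G (snd x).

Definition eval (w : word) : G := gprod (map eval_letter w).

Definition word_over (T : G -> Prop) (w : word) : Prop :=
  Forall (fun x => T (snd x)) w.

(** congruence on words generated by free cancellation and relators:
    the equivalence whose classes are the elements of <T | R> *)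
Inductive wequiv (T : G -> Prop) (R : word -> Prop) : word -> word -> Prop :=
| weq_refl w : wequiv T R w w
| weq_sym w w' : wequiv T R w w' -> wequiv T R w' w
| weq_trans w1 w2 w3 : wequiv T R w1 w2 -> wequiv T R w2 w3 -> wequiv T R w1 w3
| weq_free u v b a : T a ->
    wequiv T R (u ++ v) (u ++ (b, a) :: (negb b, a) :: v)
| weq_rel u v r : R r -> wequiv T R (u ++ v) (u ++ r ++ v).

(** <T | R> presents G (T a subset of G): the relators are words over T
    that hold in G, and the natural map from <T | R> to G is a bijection. *)
Definition presents (T : G -> Prop) (R : word -> Prop) : Prop :=
  (forall r, R r -> word_over T r /\ eval r = e) /\
  (forall g, exists w, word_over T w /\ eval w = g) /\
  (forall w w', word_over T w -> word_over T w' -> eval w = eval w' ->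
     wequiv T R w w').

Definition triangular_relators (T : G -> Prop) (w : word) : Prop :=
  exists a b c, T a /\ T b /\ T c /\ a * b * ginv G c = e /\
    w = [(true, a); (true, b); (false, c)].

Definition restricted_triangular_presentation (T : G -> Prop) (R : word -> Prop)
  : Prop :=
  finite_set T /\
  (forall a, T a -> T (ginv G a) -> False) /\
  (forall w, R w <-> triangular_relators T w) /\
  presents T R /\
  (forall a b c, T a -> T b -> T c -> a * b * c <> e) /\
  (forall a b c, T a -> T b -> T c -> T (a * b * c) -> T (a * b) /\ T (b * c)).

End Defs.
Arguments word : clear implicits.

(* Main.v *)
Require Import Defs.
From Stdlib Require Import List Lia Classical PeanoNat.
Import ListNotations.

Local Notation "x * y" := (gmul _ x y).

Lemma mulVr (G : group) (x : G) : x * ginv G x = gone G.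
Proof.
  set (y := ginv G x).
  transitivity (ginv G y * y * (x * y)).
  - rewrite gmulVl, gmul1l. reflexivity.
  - rewrite <- gmulA, (gmulA G y x y). unfold y at 2 3. rewrite gmulVl, gmul1l.
    apply gmulVl.
Qed.

Lemma mulr1 (G : group) (x : G) : x * gone G = x.
Proof. rewrite <- (gmulVl G x), gmulA, mulVr, gmul1l. reflexivity. Qed.

Lemma mulKl (G : group) (x y : G) : ginv G x * (x * y) = y.
Proof. rewrite gmulA, gmulVl, gmul1l. reflexivity. Qed.

Lemma mulKr (G : group) (x y : G) : x * (ginv G x * y) = y.
Proof. rewrite gmulA, mulVr, gmul1l. reflexivity. Qed.

Lemma mulcanl (G : group) (x y z : G) : x * y = x * z -> y = z.
Proof. intro H. rewrite <- (mulKl G x y), H, mulKl. reflexivity. Qed.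

Lemma inv_uniq (G : group) (x y : G) : x * y = gone G -> y = ginv G x.
Proof. intro H. apply (mulcanl G x). rewrite H, mulVr. reflexivity. Qed.

Lemma invK (G : group) (x : G) : ginv G (ginv G x) = x.
Proof. symmetry. apply inv_uniq. apply gmulVl. Qed.

Lemma invM (G : group) (x y : G) : ginv G (x * y) = ginv G y * ginv G x.
Proof. symmetry. apply inv_uniq. rewrite <- gmulA, (gmulA G y), mulVr, gmul1l, mulVr. reflexivity. Qed.

Lemma inv1 (G : group) : ginv G (gone G) = gone G.
Proof. symmetry. apply inv_uniq. apply gmul1l. Qed.

Lemma mulIr (G : group) (x y z : G) : y * x = z * x -> y = z.
Proof. intro H. rewrite <- (mulr1 G y), <- (mulVr G x), gmulA, H, <- gmulA, mulVr, mulr1. reflexivity. Qed.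

Local Notation "x * y" := (gmul _ x y).

Definition flip {G : group} (x : bool * G) : bool * G := (negb (fst x), snd x).
Definition winv {G : group} (w : word G) : word G := rev (map flip w).

Section W.
End W.

Lemma weq_app_l (G : group) (T : G -> Prop) R u w1 w2 :
  wequiv T R w1 w2 -> wequiv T R (u ++ w1) (u ++ w2).
Proof.
  induction 1.
  - apply weq_refl.
  - apply weq_sym; auto.
  - eapply weq_trans; eauto.
  - rewrite !app_assoc. apply weq_free; auto.
  - rewrite !app_assoc. rewrite <- (app_assoc (u ++ u0) r v). apply weq_rel; auto.
Qed.

Lemma weq_app_r (G : group) (T : G -> Prop) R v w1 w2 :
  wequiv T R w1 w2 -> wequiv T R (w1 ++ v) (w2 ++ v).
Proof.
  induction 1.
  - apply weq_refl.
  - apply weq_sym; auto.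
  - eapply weq_trans; eauto.
  - rewrite <- !app_assoc. simpl. apply weq_free; auto.
  - rewrite <- !app_assoc. apply weq_rel; auto.
Qed.

Lemma weq_ctx (G : group) (T : G -> Prop) R u v w1 w2 :
  wequiv T R w1 w2 -> wequiv T R (u ++ w1 ++ v) (u ++ w2 ++ v).
Proof. intro H. apply weq_app_l, weq_app_r, H. Qed.

Lemma weq_app (G : group) (T : G -> Prop) R a b c d :
  wequiv T R a b -> wequiv T R c d -> wequiv T R (a ++ c) (b ++ d).
Proof.
  intros H1 H2. eapply weq_trans. apply weq_app_r, H1. apply weq_app_l, H2.
Qed.

Lemma weq_cons (G : group) (T : G -> Prop) R x c d :
  wequiv T R c d -> wequiv T R (x :: c) (x :: d).
Proof. intro H. apply (weq_app_l _ _ _ [x]), H. Qed.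

Lemma weq_pair (G : group) (T : G -> Prop) R (x : bool * G) :
  T (snd x) -> wequiv T R [x; flip x] [].
Proof.
  intro H. destruct x as [b a]. apply weq_sym.
  apply (weq_free T R [] [] b a H).
Qed.

Lemma word_over_app (G : group) (T : G -> Prop) (u v : word G) :
  word_over T u -> word_over T v -> word_over T (u ++ v).
Proof. intros; apply Forall_app; auto. Qed.

Lemma word_over_winv (G : group) (T : G -> Prop) (u : word G) :
  word_over T u -> word_over T (winv u).
Proof.
  intro H. unfold winv, word_over in *. apply Forall_rev. apply Forall_map.
  eapply Forall_impl; [|exact H]. intros [b a]; simpl; auto.
Qed.

Lemma winv_invol (G : group) (u : word G) : winv (winv u) = u.
Proof.
  unfold winv. rewrite map_rev, rev_involutive, map_map.
  rewrite <- (map_id u) at 2. apply map_ext. intros [b a]; unfold flip; simpl.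
  rewrite Bool.negb_involutive; reflexivity.
Qed.

Lemma winv_cons (G : group) (x : bool * G) u : winv (x :: u) = winv u ++ [flip x].
Proof. reflexivity. Qed.

Lemma winv_app (G : group) (u v : word G) : winv (u ++ v) = winv v ++ winv u.
Proof. unfold winv. rewrite map_app, rev_app_distr. reflexivity. Qed.

Lemma weq_cancel (G : group) (T : G -> Prop) R (w : word G) :
  word_over T w -> wequiv T R (w ++ winv w) [].
Proof.
  induction w as [|x w IH]; intro H.
  - apply weq_refl.
  - inversion H; subst. rewrite winv_cons. simpl.
    eapply weq_trans.
    + apply (weq_cons _ _ _ x). rewrite app_assoc.
      apply (weq_app_r _ _ _ [flip x]). apply IH; auto.
    + simpl. apply weq_pair; auto.
Qed.

Lemma weq_cancel' (G : group) (T : G -> Prop) R (w : word G) :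
  word_over T w -> wequiv T R (winv w ++ w) [].
Proof.
  intro H. rewrite <- (winv_invol G w) at 2. apply weq_cancel.
  apply word_over_winv; auto.
Qed.

Lemma weq_solve (G : group) (T : G -> Prop) R (x y : word G) :
  word_over T y -> wequiv T R (x ++ y) [] -> wequiv T R x (winv y).
Proof.
  intros Hy H. apply weq_trans with (x ++ y ++ winv y).
  - apply weq_sym. rewrite <- (app_nil_r x) at 2.
    apply weq_app_l. apply weq_cancel; auto.
  - rewrite app_assoc. rewrite <- (app_nil_l (winv y)) at 2.
    apply weq_app_r; auto.
Qed.

Lemma weq_rot (G : group) (T : G -> Prop) R (x y : word G) :
  word_over T y -> wequiv T R (x ++ y) [] -> wequiv T R (y ++ x) [].
Proof.
  intros Hy H. apply weq_trans with (y ++ winv y).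
  - apply weq_app_l. apply weq_solve; eauto.
  - apply weq_cancel; auto.
Qed.

Lemma weq_relnil (G : group) (T : G -> Prop) (R : word G -> Prop) r :
  R r -> wequiv T R r [].
Proof.
  intro H. apply weq_sym. rewrite <- (app_nil_r r).
  apply (weq_rel T R [] [] r H).
Qed.

Lemma eval_app (G : group) (u v : word G) : eval (u ++ v) = eval u * eval v.
Proof.
  induction u as [|x u IH]; simpl.
  - unfold eval; simpl. rewrite gmul1l. reflexivity.
  - unfold eval in *; simpl. rewrite IH, gmulA. reflexivity.
Qed.

Lemma eval_winv (G : group) (u : word G) : eval (winv u) = ginv G (eval u).
Proof.
  induction u as [|x u IH].
  - unfold eval; simpl. rewrite inv1; reflexivity.
  - rewrite winv_cons, eval_app, IH.
    unfold eval; simpl. rewrite invM, mulr1.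
    f_equal. destruct x as [[|] a]; unfold eval_letter; simpl; auto. rewrite invK; auto.
Qed.

Local Notation "x * y" := (gmul _ x y).

Section Gar.
Context {G : group} (P : G -> Prop) (D : G) (HG : garside P D).
Local Notation e := (gone G).
Local Notation inv := (ginv G).
Local Notation le := (leL P).
Local Notation S := (simples P D).
Definition Tset (x : G) := S x /\ x <> e.

Ltac dg := destruct HG as (H1&H2&H3&H4&H5&H6&H7&H8).
Lemma P1 : P e.  Proof. dg; exact H1. Qed.
Lemma PM a b : P a -> P b -> P (a * b). Proof. dg; apply H2. Qed.
Lemma PV a : P a -> P (inv a) -> a = e. Proof. dg; apply H3. Qed.
Lemma PD : P D. Proof. dg; exact H4. Qed.
Lemma Plat : lattice_order le. Proof. dg; exact H5. Qed.
Lemma Pgen x : P x <-> gen_submonoid S x. Proof. dg; apply H6. Qed.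
Lemma Pconj x : P x <-> (exists y, P y /\ x = inv D * y * D). Proof. dg; apply H7. Qed.
Lemma Pfin x : P x -> x <> e -> exists N : nat, forall l : list G,
  Forall (fun a => P a /\ a <> e) l -> gprod l = x -> length l <= N.
Proof. dg; apply H8. Qed.

Lemma simple_iff x : S x <-> P x /\ P (inv x * D).
Proof.
  unfold simples, leL. rewrite inv1, gmul1l. tauto.
Qed.

Lemma P_conj1 x : P x -> P (inv D * x * D).
Proof. intro H. apply Pconj. eauto. Qed.

Lemma P_conj2 x : P x -> P (D * x * inv D).
Proof.
  intro H. apply Pconj in H. destruct H as [y [Hy ->]].
  replace (D * (inv D * y * D) * inv D) with y; auto.
  rewrite <- !gmulA, mulKr, gmulA, <- gmulA, mulVr, mulr1. reflexivity.
Qed.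

Lemma suffixD u v : P u -> P v -> u * v = D -> P (inv v * D).
Proof.
  intros Hu Hv E. replace (inv v * D) with (inv D * u * D).
  - apply P_conj1; auto.
  - rewrite <- E, invM. rewrite <- !gmulA. f_equal. rewrite mulKl. reflexivity.
Qed.

Lemma simple_split x y : P x -> P y -> S (x * y) -> S x /\ S y.
Proof.
  intros Hx Hy Hs. apply simple_iff in Hs as [Hxy Hw].
  split; apply simple_iff; split; auto.
  - replace (inv x * D) with (y * (inv (x * y) * D)).
    + apply PM; auto.
    + rewrite invM, <- !gmulA, mulKr. reflexivity.
  - set (w := inv (x * y) * D) in *.
    assert (E : x * (y * w) = D) by (unfold w; rewrite gmulA, mulKr; reflexivity).
    pose proof (suffixD x (y * w) Hx (PM _ _ Hy Hw) E) as H.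
    replace (inv y * D) with (w * (inv (y * w) * D)).
    + apply PM; auto.
    + rewrite invM, <- !gmulA, mulKr. reflexivity.
Qed.

Lemma PV_ne a : P a -> a <> e -> ~ P (inv a).
Proof. intros Ha Hne Hi. apply Hne, PV; auto. Qed.

Lemma mul_ne a b : P a -> P b -> a <> e -> a * b <> e.
Proof.
  intros Ha Hb Hne E. apply (PV_ne a Ha Hne).
  rewrite <- (inv_uniq G a b E). auto.
Qed.

Lemma T_P a : Tset a -> P a.
Proof. intros [H _]. apply simple_iff in H. tauto. Qed.

Lemma le_trans a b c : le a b -> le b c -> le a c.
Proof. destruct Plat as [_ [H _]]. apply H. Qed.
Lemma le_antisym a b : le a b -> le b a -> a = b.
Proof. destruct Plat as [_ [_ [H _]]]. apply H. Qed.
Lemma le_refl a : le a a.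
Proof. destruct Plat as [H _]. apply H. Qed.
Lemma glb_ex a b : exists c, is_glb le a b c.
Proof. destruct Plat as [_ [_ [_ [_ H]]]]. apply H. Qed.

Lemma le_mul a b : P b -> le a (a * b).
Proof. intro H. unfold leL. rewrite mulKl. auto. Qed.

Lemma S_D : S D.
Proof. apply simple_iff. rewrite gmulVl. split; [apply PD | apply P1]. Qed.

Lemma gprod_P l : Forall Tset l -> P (gprod l).
Proof.
  induction 1; simpl. apply P1. apply PM; auto. apply T_P; auto.
Qed.

Lemma gprod_e l : Forall Tset l -> gprod l = e -> l = [].
Proof.
  intros H E. destruct H as [|a l Ha Hl]; auto. exfalso. simpl in E.
  apply (mul_ne a (gprod l)); auto. apply T_P; auto. apply gprod_P; auto.
  apply Ha.
Qed.

End Gar.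

Local Notation "x * y" := (gmul _ x y).

Section Gar2.
Context {G : group} (P : G -> Prop) (D : G) (HG : garside P D).
Local Notation e := (gone G).
Local Notation inv := (ginv G).
Local Notation le := (leL P).
Local Notation S := (simples P D).
Local Notation T := (Tset P D).

Definition R0 (w : word G) : Prop := exists s t : G, T s /\ T t /\
        S (s * t) /\ w = [(true, s); (true, t); (false, s * t)].
Local Notation W := (wequiv T R0).

Definition pw (l : list G) : word G := map (fun a => (true, a)) l.

Lemma eval_pw l : eval (pw l) = gprod l.
Proof. induction l; simpl; auto. unfold eval in *; simpl. rewrite IHl. reflexivity. Qed.

Lemma pw_over l : Forall T l -> word_over T (pw l).
Proof. induction 1; constructor; simpl; auto. Qed.

Lemma T_mul a b : T a -> T b -> S (a * b) -> T (a * b).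
Proof.
  intros Ha Hb Hs. split; auto. apply (mul_ne P D HG); try apply (T_P P D); auto.
  apply Ha.
Qed.

Lemma rel2 a b : T a -> T b -> S (a * b) -> W [(true,a);(true,b)] [(true,a*b)].
Proof.
  intros Ha Hb Hs.
  apply (weq_solve G T R0 [(true,a);(true,b)] [(false, a*b)]).
  - constructor; simpl; [apply T_mul; auto | constructor].
  - apply weq_relnil. exists a, b. auto.
Qed.

Lemma lemA : forall l a, Forall T (a :: l) -> forall s, is_glb le (gprod (a :: l)) D s ->
  T s /\ exists l', Forall T l' /\ W (pw (a :: l)) (pw (s :: l')).
Proof.
  induction l as [|b l1 IH]; intros a Hal s Hs.
  - inversion Hal; subst. simpl in Hs. rewrite mulr1 in Hs.
    assert (Ea : a = s).
    { destruct Hs as [X1 [X2 X3]]. apply (le_antisym P D HG); auto.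
      apply X3. apply (le_refl P D HG). destruct H1 as [[_ HH] _]; exact HH. }
    subst. split; auto. exists []. split; auto. apply weq_refl.
  - inversion Hal as [|? ? Ha Hbl]; subst.
    set (y := gprod (b :: l1)).
    assert (Hy : P y) by (apply (gprod_P P D HG); auto).
    destruct (glb_ex P D HG y D) as [t Ht].
    destruct (IH b Hbl t Ht) as [Tt [l2 [Hl2 Hw]]].
    pose proof (T_P P D a Ha) as Pa.
    destruct Hs as [Hsx [HsD Hsg]].
    change (gprod (a :: b :: l1)) with (a * y) in *.
    assert (Has : le a s).
    { apply Hsg. apply le_mul; auto. apply Ha. }
    set (r := inv a * s).
    assert (Es : s = a * r) by (unfold r; rewrite mulKr; reflexivity).
    assert (Pr : P r) by exact Has.
    assert (Ss : S s).
    { apply simple_iff; auto. split.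
      - rewrite Es. apply (PM P D HG); auto.
      - exact HsD. }
    assert (Ts : T s).
    { split; auto. rewrite Es. apply (mul_ne P D HG); auto. apply Ha. }
    split; auto.
    assert (Sr : S r) by (rewrite Es in Ss; apply (simple_split P D HG a r); auto).
    assert (Hrt : le r t).
    { destruct Ht as [_ [_ Ht3]]. apply Ht3.
      - unfold leL. unfold r. rewrite invM, invK, <- gmulA. exact Hsx.
      - apply Sr. }
    set (q := inv r * t) in *.
    assert (Et : t = r * q) by (unfold q; rewrite mulKr; reflexivity).
    assert (Pq : P q) by exact Hrt.
    assert (Sq : S q) by (destruct Tt as [St _]; rewrite Et in St; apply (simple_split P D HG r q); auto).
    assert (Wa : W (pw (a :: b :: l1)) ((true,a) :: (true,t) :: pw l2)).
    { apply (weq_cons G T R0 (true,a)). exact Hw. }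
    destruct (classic (r = e)) as [Hr0 | Hr0].
    + exists (t :: l2). split; auto.
      assert (Hsa : s = a) by (rewrite Es, Hr0, mulr1; reflexivity).
      rewrite Hsa. exact Wa.
    + assert (Tr : T r) by (split; auto).
      assert (Wrs : W [(true,a);(true,r)] [(true,s)]).
      { rewrite Es. apply rel2; auto. rewrite <- Es; auto. }
      destruct (classic (q = e)) as [Hq0 | Hq0].
      * exists l2. split; auto.
        assert (Htr : t = r) by (rewrite Et, Hq0, mulr1; reflexivity).
        eapply weq_trans. exact Wa. rewrite Htr.
        apply (weq_app_r G T R0 (pw l2) [(true,a);(true,r)] [(true,s)]). exact Wrs.
      * assert (Tq : T q) by (split; auto).
        exists (q :: l2). split; auto.
        eapply weq_trans. exact Wa.
        apply weq_trans with ((true,a) :: (true,r) :: (true,q) :: pw l2).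
        -- apply (weq_cons G T R0 (true,a)).
           apply (weq_app_r G T R0 (pw l2) [(true,t)] [(true,r);(true,q)]).
           apply weq_sym. rewrite Et. apply rel2; auto. rewrite <- Et. apply Tt.
        -- apply (weq_app_r G T R0 ((true,q) :: pw l2) [(true,a);(true,r)] [(true,s)]).
           exact Wrs.
Qed.

End Gar2.

Local Notation "x * y" := (gmul _ x y).

Section Gar3.
Context {G : group} (P : G -> Prop) (D : G) (HG : garside P D).
Local Notation e := (gone G).
Local Notation inv := (ginv G).
Local Notation le := (leL P).
Local Notation S := (simples P D).
Local Notation T := (Tset P D).
Local Notation W := (wequiv T (R0 P D)).

Lemma eval_W w1 w2 : W w1 w2 -> eval w1 = eval w2.
Proof.
  induction 1; auto.
  - congruence.
  - rewrite !eval_app. f_equal. unfold eval; simpl.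
    rewrite gmulA. replace (eval_letter (b, a) * eval_letter (negb b, a)) with e.
    + rewrite gmul1l; reflexivity.
    + destruct b; unfold eval_letter; simpl. symmetry; apply mulVr. symmetry; apply gmulVl.
  - rewrite !eval_app. destruct H as [s [t [_ [_ [_ ->]]]]].
    replace (eval [(true, s); (true, t); (false, s * t)]) with e.
    + rewrite gmul1l. reflexivity.
    + unfold eval; simpl. unfold eval_letter; simpl. rewrite mulr1, gmulA, mulVr. reflexivity.
Qed.

Lemma lemB n : forall u v, Forall T u -> Forall T v -> gprod u = gprod v ->
  (forall l, Forall T l -> gprod l = gprod u -> length l <= n) -> W (pw u) (pw v).
Proof.
  induction n as [|n IH]; intros u v Hu Hv E Hb.
  - destruct u as [|a u1].
    + assert (Ev : v = []) by (apply (gprod_e P D HG v Hv); rewrite <- E; reflexivity). rewrite Ev. apply weq_refl.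
    + specialize (Hb _ Hu eq_refl). simpl in Hb. lia.
  - destruct u as [|a u1].
    + assert (Ev : v = []) by (apply (gprod_e P D HG v Hv); rewrite <- E; reflexivity). rewrite Ev. apply weq_refl.
    + destruct v as [|b v1].
      * pose proof (gprod_e P D HG (a :: u1) Hu E). discriminate.
      * destruct (glb_ex P D HG (gprod (a :: u1)) D) as [s Hs].
        destruct (lemA P D HG u1 a Hu s Hs) as [Ts [u' [Hu' Wu]]].
        assert (Hs' : is_glb le (gprod (b :: v1)) D s) by (rewrite <- E; exact Hs).
        destruct (lemA P D HG v1 b Hv s Hs') as [_ [v' [Hv' Wv]]].
        pose proof (eval_W _ _ Wu) as Eu. pose proof (eval_W _ _ Wv) as Ev.
        rewrite !eval_pw in Eu, Ev. simpl in Eu, Ev.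
        assert (E' : gprod u' = gprod v').
        { apply (mulcanl G s). rewrite <- Eu, <- Ev. exact E. }
        eapply weq_trans. exact Wu. eapply weq_trans. 2: apply weq_sym; exact Wv.
        apply (weq_cons G T (R0 P D) (true, s)). apply IH; auto.
        intros l Hl El. assert (Hsl : Forall T (s :: l)) by (constructor; auto).
        specialize (Hb _ Hsl). simpl in Hb. rewrite El, <- Eu in Hb.
        specialize (Hb eq_refl). lia.
Qed.

Lemma posW u v : Forall T u -> Forall T v -> gprod u = gprod v -> W (pw u) (pw v).
Proof.
  intros Hu Hv E. destruct (classic (gprod u = e)) as [He | Hne].
  - assert (Ev : v = []) by (apply (gprod_e P D HG v Hv); congruence). rewrite (gprod_e P D HG u Hu He), Ev. apply weq_refl.
  - destruct (Pfin P D HG (gprod u) (gprod_P P D HG u Hu) Hne) as [N HN].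
    apply (lemB N); auto. intros l Hl El. apply HN; auto.
    eapply Forall_impl; [|exact Hl]. intros a Ha. split. apply (T_P P D a Ha). apply Ha.
Qed.

End Gar3.

Local Notation "x * y" := (gmul _ x y).

Section Gar4.
Context {G : group} (P : G -> Prop) (D : G) (HG : garside P D).
Local Notation e := (gone G).
Local Notation inv := (ginv G).
Local Notation le := (leL P).
Local Notation S := (simples P D).
Local Notation T := (Tset P D).
Local Notation W := (wequiv T (R0 P D)).

Definition psi (a : G) : G := D * a * inv D.

Lemma rel3 a b c : T a -> T b -> S (a * b) -> a * b = c ->
  W [(true,a);(true,b);(false,c)] [].
Proof. intros Ha Hb Hs <-. apply weq_relnil. exists a, b. auto. Qed.

Lemma T_psi a : T a -> T (psi a).
Proof.
  intros [Sa Ha]. pose proof Sa as Sa'. apply simple_iff in Sa' as [Pa Pc].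
  split.
  - apply simple_iff. split.
    + apply (P_conj2 P D HG); auto.
    + replace (inv (psi a) * D) with (D * (inv a * D) * inv D).
      * apply (P_conj2 P D HG); auto.
      * unfold psi. rewrite !invM, invK. rewrite <- !gmulA.
        rewrite gmulVl, mulVr, !mulr1. reflexivity.
  - intro E. apply Ha. unfold psi in E.
    assert (Ea : a = inv D * (D * a * inv D) * D)
      by (rewrite <- !gmulA, gmulVl, mulr1, mulKl; reflexivity).
    rewrite Ea, E, mulr1, gmulVl. reflexivity.
Qed.

Lemma over1 b a : T a -> word_over T [(b,a)].
Proof. intro H. constructor; auto. Qed.

Lemma T_D a : T a -> T D.
Proof.
  intros [Sa Ha]. split. apply (S_D P D HG). intro E. apply Ha.
  apply simple_iff in Sa as [Pa Pc]. rewrite E, mulr1 in Pc. apply (PV P D HG); auto.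
Qed.

Lemma swap a : T a -> W [(true,a);(false,D)] [(false,D);(true,psi a)].
Proof.
  intros Ta. pose proof (T_D a Ta) as TD. destruct (classic (a = D)) as [Ea | Ea].
  - subst a. assert (psi D = D) as -> by (unfold psi; rewrite <- gmulA, mulVr, mulr1; reflexivity).
    eapply weq_trans. apply (weq_pair G T (R0 P D) (true, D)); auto.
    apply weq_sym. apply (weq_pair G T (R0 P D) (false, D)); auto.
  - set (d := D * inv a).
    pose proof Ta as [Sa Hane]. pose proof Sa as Sa'. apply simple_iff in Sa' as [Pa Pc].
    assert (Pd : P d).
    { replace d with (D * (inv a * D) * inv D). apply (P_conj2 P D HG); auto.
      unfold d. rewrite <- !gmulA, mulVr, mulr1. reflexivity. }
    assert (Sd : S d).
    { apply simple_iff. split; auto. unfold d. rewrite invM, invK, <- gmulA, gmulVl, mulr1. auto. }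
    assert (Td : T d).
    { split; auto. intro E. apply Ea. unfold d in E.
      rewrite <- (invK G a), <- (invK G D). f_equal. apply inv_uniq. exact E. }
    assert (Eda : d * a = D) by (unfold d; rewrite <- gmulA, gmulVl, mulr1; reflexivity).
    assert (Epd : psi a * d = D)
      by (unfold psi, d; rewrite <- !gmulA, mulKl, mulVr, mulr1; reflexivity).
    assert (W1 : W [(true,a);(false,D)] [(false,d)]).
    { apply (weq_solve G T (R0 P D) _ [(true,d)]). apply over1; auto.
      apply (weq_rot G T (R0 P D) [(true,d)] [(true,a);(false,D)]).
      { apply Forall_cons; [exact Ta| apply Forall_cons; [exact TD | apply Forall_nil]]. }
      apply rel3; auto. rewrite Eda. apply (S_D P D HG). }
    assert (W2 : W [(false,D);(true,psi a)] [(false,d)]).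
    { apply (weq_solve G T (R0 P D) _ [(true,d)]). apply over1; auto.
      apply (weq_rot G T (R0 P D) [(true,psi a);(true,d)] [(false,D)]).
      { apply Forall_cons; [exact TD | apply Forall_nil]. }
      apply rel3; auto. apply T_psi; auto. rewrite Epd. apply (S_D P D HG). }
    eapply weq_trans. exact W1. apply weq_sym. exact W2.
Qed.
End Gar4.

Local Notation "x * y" := (gmul _ x y).

Section Gar5.
Context {G : group} (P : G -> Prop) (D : G) (HG : garside P D).
Local Notation e := (gone G).
Local Notation inv := (ginv G).
Local Notation S := (simples P D).
Local Notation T := (Tset P D).
Local Notation W := (wequiv T (R0 P D)).
Local Notation psi := (psi D).

Lemma T_iter k a : T a -> T (Nat.iter k psi a).
Proof.
  intro H. induction k; simpl; auto. apply (T_psi P D HG); auto.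
Qed.

Lemma move k : forall a, T a ->
  W ((true,a) :: repeat (false,D) k) (repeat (false,D) k ++ [(true, Nat.iter k psi a)]).
Proof.
  induction k as [|k IH]; intros a Ha.
  - apply weq_refl.
  - simpl repeat.
    apply weq_trans with ((false,D) :: (true, psi a) :: repeat (false,D) k).
    + apply (weq_app_r G T (R0 P D) (repeat (false,D) k) [(true,a);(false,D)] [(false,D);(true,psi a)]).
      apply (swap P D HG); auto.
    + apply (weq_cons G T (R0 P D) (false,D)).
      rewrite Nat.iter_succ_r. apply IH. apply (T_psi P D HG); auto.
Qed.

Lemma invletter a : T a -> a <> D -> W [(false,a)] [(true, inv a * D); (false, D)].
Proof.
  intros Ta Ea. pose proof (T_D P D HG a Ta) as TD.
  set (c := inv a * D).
  pose proof Ta as [Sa Hane]. pose proof Sa as Sa'. apply simple_iff in Sa' as [Pa Pc].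
  assert (Eac : a * c = D) by (unfold c; apply mulKr).
  assert (Tc : T c).
  { split.
    - assert (SD : S (a * c)) by (rewrite Eac; apply (S_D P D HG)).
      apply (simple_split P D HG a c Pa Pc) in SD. apply SD.
    - intro E. apply Ea. rewrite <- Eac, E, mulr1. reflexivity. }
  apply weq_sym.
  apply (weq_solve G T (R0 P D) _ [(true,a)]). { apply Forall_cons; [exact Ta|apply Forall_nil]. }
  apply (weq_rot G T (R0 P D) [(true,a)] [(true,c);(false,D)]).
  { apply Forall_cons; [exact Tc| apply Forall_cons; [exact TD | apply Forall_nil]]. }
  apply (rel3 P D); auto. rewrite Eac. apply (S_D P D HG).
Qed.

Lemma normal_form (w : word G) : word_over T w ->
  exists k u, Forall T u /\ W w (repeat (false,D) k ++ pw u).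
Proof.
  induction w as [|[b a] w IH]; intro Hw.
  - exists 0, []. split; auto. apply weq_refl.
  - inversion Hw as [|? ? Ha Hw']; subst. simpl in Ha.
    destruct (IH Hw') as [k [u [Hu Wu]]].
    pose proof (T_D P D HG a Ha) as TD.
    destruct b.
    + exists k, (Nat.iter k psi a :: u). split. constructor; auto. apply T_iter; auto.
      eapply weq_trans. apply (weq_cons G T (R0 P D) (true,a)). exact Wu.
      rewrite app_comm_cons.
      eapply weq_trans. apply weq_app_r. apply move; auto.
      rewrite <- app_assoc. apply weq_refl.
    + destruct (classic (a = D)) as [Ea | Ea].
      * subst a. exists (Datatypes.S k), u. split; auto.
        apply (weq_cons G T (R0 P D) (false,D)). exact Wu.
      * set (c := inv a * D).
        assert (Tc : T c).
        { pose proof Ha as [Sa Hane]. pose proof Sa as Sa'.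
          apply simple_iff in Sa' as [Pa Pc].
          assert (Eac : a * c = D) by (unfold c; apply mulKr).
          split.
          - assert (SD : S (a * c)) by (rewrite Eac; apply (S_D P D HG)).
            apply (simple_split P D HG a c Pa Pc) in SD. apply SD.
          - intro E. apply Ea. rewrite <- Eac, E, mulr1. reflexivity. }
        exists (Datatypes.S k), (Nat.iter (Datatypes.S k) psi c :: u). split. constructor; auto. apply T_iter; auto.
        eapply weq_trans. apply (weq_app G T (R0 P D) [(false,a)] [(true,c);(false,D)]).
        apply invletter; auto. exact Wu.
        change ([(true, c); (false, D)] ++ repeat (false, D) k ++ pw u) with
          (((true, c) :: repeat (false, D) (Datatypes.S k)) ++ pw u).
        eapply weq_trans. apply weq_app_r. apply move; auto.
        rewrite <- app_assoc. apply weq_refl.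
Qed.

End Gar5.

Local Notation "x * y" := (gmul _ x y).

Section Gar6.
Context {G : group} (P : G -> Prop) (D : G) (HG : garside P D).
Local Notation e := (gone G).
Local Notation inv := (ginv G).
Local Notation S := (simples P D).
Local Notation T := (Tset P D).
Local Notation W := (wequiv T (R0 P D)).

Lemma repeat_winv k : repeat (false, D) k = winv (pw (repeat D k)).
Proof. unfold winv, pw. rewrite !map_repeat, rev_repeat. reflexivity. Qed.


Lemma complete w w' : word_over T w -> word_over T w' -> eval w = eval w' -> W w w'.
Proof.
  intros Hw Hw' E.
  destruct (classic (T D)) as [TD | nTD].
  2:{ assert (Hn : forall z : word G, word_over T z -> z = []).
      { intros z Hz. destruct Hz as [|x z Hx _]; auto. exfalso. apply nTD.
        apply (T_D P D HG (snd x)); auto. }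
      rewrite (Hn w Hw), (Hn w' Hw'). apply weq_refl. }
  set (z := w ++ winv w').
  assert (Hz : word_over T z) by (apply word_over_app; auto; apply word_over_winv; auto).
  assert (Ez : eval z = e) by (unfold z; rewrite eval_app, eval_winv, E; apply mulVr).
  destruct (normal_form P D HG z Hz) as [k [u [Hu Wz]]].
  rewrite repeat_winv in Wz.
  pose proof (eval_W P D _ _ Wz) as Ez'. rewrite Ez, eval_app, eval_winv, !eval_pw in Ez'.
  assert (Hrep : Forall T (repeat D k)) by (apply Forall_forall; intros x Hx;
    apply repeat_spec in Hx; subst; auto).
  assert (Eu : gprod u = gprod (repeat D k)).
  { rewrite <- (mulKr G (gprod (repeat D k)) (gprod u)), <- Ez', mulr1. reflexivity. }
  assert (Wz0 : W z []).
  { eapply weq_trans. exact Wz.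
    eapply weq_trans. apply weq_app_l. apply (posW P D HG u (repeat D k)); auto.
    apply weq_cancel'. apply pw_over; auto. }
  rewrite <- (winv_invol G w'). apply weq_solve; auto. apply word_over_winv; auto.
Qed.

Lemma Pword x : P x -> exists l, Forall T l /\ gprod l = x.
Proof.
  intro H. apply (Pgen P D HG) in H. destruct H as [l [Hl ->]].
  induction Hl as [|a l Ha Hl IH].
  - exists []. auto.
  - destruct IH as [l' [Hl' E]].
    destruct (classic (a = e)) as [Ea | Ea].
    + exists l'. split; auto. simpl. rewrite Ea, gmul1l. auto.
    + exists (a :: l'). split. constructor; auto. split; auto. simpl. rewrite E. reflexivity.
Qed.

Lemma generate g : exists w, word_over T w /\ eval w = g.
Proof.
  destruct (glb_ex P D HG e g) as [c [Hc1 [Hc2 _]]].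
  unfold leL in Hc1, Hc2. rewrite mulr1 in Hc1.
  destruct (Pword _ Hc1) as [l1 [Hl1 E1]].
  destruct (Pword _ Hc2) as [l2 [Hl2 E2]].
  exists (winv (pw l1) ++ pw l2). split.
  - apply word_over_app. apply word_over_winv, pw_over; auto. apply pw_over; auto.
  - rewrite eval_app, eval_winv, !eval_pw, E1, E2, invK. apply mulKr.
Qed.

Lemma finite_T : finite_set S -> finite_set T.
Proof.
  intros [L HL].
  assert (H : forall L0 : list G, exists l, forall x, (In x L0 /\ x <> e) <-> In x l).
  { induction L0 as [|a L0 IH].
    - exists []. simpl. tauto.
    - destruct IH as [l Hl]. destruct (classic (a = e)) as [Ea | Ea].
      + exists l. intro x. rewrite <- Hl. simpl. split.
        * intros [[<- | H] H2]; [congruence | auto].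
        * tauto.
      + exists (a :: l). intro x. simpl. rewrite <- Hl. split.
        * intros [[<- | H] H2]; auto.
        * intros [<- | [H1 H2]]; auto. }
  destruct (H L) as [l Hl]. exists l. intro x. rewrite <- Hl. unfold Tset. rewrite HL. tauto.
Qed.

End Gar6.

Theorem mainTheorem8 (G : group) (P : G -> Prop) (Delta : G) :
  garside_finite_type P Delta ->
  let T := fun x : G => simples P Delta x /\ x <> gone G in
  restricted_triangular_presentation T
    (fun w : word G => exists s t : G, T s /\ T t /\
        simples P Delta (gmul G s t) /\
        w = [(true, s); (true, t); (false, gmul G s t)]).
Proof.
  intros [HG HF] T.
  change (restricted_triangular_presentation (Tset P Delta) (R0 P Delta)).
  split; [|split; [|split; [|split; [|split]]]].
  - apply finite_T; auto.
  - intros a [[Sa _] Ha] [[Si _] _]. apply Ha. apply (PV P Delta HG).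
    + unfold leL in Sa. rewrite inv1, gmul1l in Sa. exact Sa.
    + unfold leL in Si. rewrite inv1, gmul1l in Si. exact Si.
  - intro w. split.
    + intros [s [t [Ts [Tt [Sst ->]]]]]. exists s, t, (gmul G s t).
      refine (conj Ts (conj Tt (conj _ (conj _ eq_refl)))).
      apply (T_mul P Delta HG); auto. apply mulVr.
    + intros [a [b [c [Ta [Tb [Tc [E ->]]]]]]].
      assert (Ec : gmul G a b = c).
      { rewrite <- (mulr1 G (gmul G a b)), <- (gmulVl G c), gmulA, E, gmul1l. reflexivity. }
      exists a, b. subst c. refine (conj Ta (conj Tb (conj _ eq_refl))). apply Tc.
  - split; [|split].
    + intros r [s [t [Ts [Tt [Sst ->]]]]]. split.
      * apply Forall_cons; [exact Ts|]. apply Forall_cons; [exact Tt|].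
        apply Forall_cons; [|apply Forall_nil]. apply (T_mul P Delta HG); auto.
      * unfold eval; simpl; unfold eval_letter; simpl.
        rewrite mulr1, gmulA, mulVr. reflexivity.
    + apply (generate P Delta HG).
    + apply (complete P Delta HG).
  - intros a b c Ta Tb Tc E. destruct Tc as [Sc Hc]. apply Hc.
    apply (PV P Delta HG). apply (T_P P Delta c); split; auto.
    rewrite (inv_uniq G _ _ E), invK. apply (PM P Delta HG); apply (T_P P Delta); auto.
  - intros a b c Ta Tb Tc [Sabc _].
    pose proof (T_P P Delta a Ta) as Pa. pose proof (T_P P Delta b Tb) as Pb.
    pose proof (T_P P Delta c Tc) as Pc.
    split.
    + apply (T_mul P Delta HG); auto.
      apply (simple_split P Delta HG (gmul G a b) c); auto. apply (PM P Delta HG); auto.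
    + apply (T_mul P Delta HG); auto.
      rewrite <- gmulA in Sabc.
      apply (simple_split P Delta HG a (gmul G b c)); auto. apply (PM P Delta HG); auto.
Qed.
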